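(* Let $K$ be a field, and let $R \in \mathfrak R_K$ be of countable type. Then $R$ has a conormed multiplicative basis.
   Context: Socle sequence of a ring $R$: $S_0 = 0$, $S_{\alpha+1}/S_\alpha = \mathrm{Soc}(R/S_\alpha)$, $S_\alpha = \bigcup_{\beta<\alpha}S_\beta$ for limit $\alpha$; $R$ is semiartinian if $S_\tau = R$ for some $\tau$, the least such $\tau$ (of the form $\sigma+1$) being the Loewy length; layers $L_\alpha = S_{\alpha+1}/S_\alpha$. $K^{(\lambda)}$ is the direct sum of $\lambda$ copies of $K$ as a $K$-algebra without unit. $\mathfrak R_K$ is the class of commutative von Neumann regular semiartinian $K$-algebras $R$ of Loewy length $\sigma+1$ such that for each $\alpha\le\sigma$ there is a cardinal $\lambda_\alpha>0$ and a $K$-linear isomorphism of $K$-algebras without unit $L_\alpha\cong K^{(\lambda_\alpha)}$. $R$ is of countable type if $\sigma$ and all $\lambda_\alpha$ are countable. A $K$-basis $B$ of a $K$-algebra $R$ is multiplicative if for all $b,b'\in B$ either $bb'=0$ or $bb'\in B$. A $K$-basis $B$ of a semiartinian $K$-algebra $R$ of Loewy length $\sigma+1$ is conormed if $B$ contains a $K$-basis of $S_\alpha$ for each $\alpha\le\sigma$. *)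

(* Defs.v *)
From HB Require Import structures.
From mathcomp Require Import all_boot all_order all_algebra.
From mathcomp Require Import boolp classical_sets cardinality.
Set Implicit Arguments. Unset Strict Implicit. Unset Printing Implicit Defensive.
Import GRing.Theory.
Local Open Scope classical_set_scope.
Local Open Scope ring_scope.

Section Defs.
Variables (K : fieldType) (R : comAlgType K).

Definition is_ideal (J : set R) : Prop :=
  [/\ J 0, (forall x y, J x -> J y -> J (x + y)) & (forall r x, J x -> J (r * x))].

(** J/I is a minimal ideal of R/I (J an ideal of R with I strictly contained in J,
    no ideal strictly in between) *)
Definition minimal_over (I J : set R) : Prop :=
  [/\ is_ideal J, I `<=` J, I != J &
      forall J', is_ideal J' -> I `<=` J' -> J' `<=` J -> J' = I \/ J' = J].

(** preimage in R of Soc(R/I): the ideal generated by I and all J with J/I minimal *)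
Definition socle_over (I : set R) : set R :=
  \bigcap_(J in [set J | is_ideal J /\ I `<=` J /\
                  forall M, minimal_over I M -> M `<=` J]) J.

(** The members S_alpha of the socle sequence: the smallest family containing
    S_0 = 0, closed under S |-> S' (S'/S = Soc(R/S)) and under unions
    (limit steps; the union of the empty family is the zero ideal). *)
Inductive socle_stage : set R -> Prop :=
| stage_succ (I : set R) : socle_stage I -> socle_stage (socle_over I)
| stage_union (F : set (set R)) : (forall I, F I -> socle_stage I) ->
    socle_stage ([set 0] `|` \bigcup_(I in F) I).

Definition semiartinian : Prop := socle_stage setT.

Definition von_neumann_regular : Prop := forall a : R, exists x, a = a * x * a.

(** L = T/S is isomorphic, as a K-algebra without unit, to K^(I) (finitely
    supported functions I -> K with pointwise operations); stated through the
    first isomorphism theorem: a surjective K-linear multiplicative map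
    T -> K^(I) with kernel S. *)
Definition layer_iso (S T : set R) (I : Type) : Prop :=
  exists f : R -> I -> K,
  [/\ forall x, T x -> finite_set [set i | f x i != 0],
      forall (a : K) x y, T x -> T y -> f (a *: x + y) = (fun i => a * f x i + f y i),
      forall x y, T x -> T y -> f (x * y) = (fun i => f x i * f y i),
      forall g : I -> K, finite_set [set i | g i != 0] -> exists2 x, T x & f x = g
    & forall x, T x -> (f x = (fun _ => 0) <-> S x)].

Definition in_RK : Prop :=
  [/\ von_neumann_regular, semiartinian &
      forall S, socle_stage S -> S != setT ->
        exists (I : Type), (exists i : I, True) /\ layer_iso S (socle_over S) I].

(** R in R_K of countable type: the Loewy length (equivalently the set of
    socle-sequence members) is countable and every lambda_alpha is countable *)
Definition RK_countable_type : Prop :=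
  [/\ in_RK, countable [set S | socle_stage S] &
      forall S, socle_stage S -> S != setT ->
        exists (I : Type), [/\ exists i : I, True, countable [set: I] &
                              layer_iso S (socle_over S) I]].

Definition lin_free (B : set R) : Prop :=
  forall (s : seq R) (c : R -> K), uniq s -> (forall b, b \in s -> B b) ->
    \sum_(b <- s) c b *: b = 0 -> forall b, b \in s -> c b = 0.

Definition lin_span (B : set R) : set R :=
  [set x | exists (s : seq R) (c : R -> K),
             (forall b, b \in s -> B b) /\ x = \sum_(b <- s) c b *: b].

Definition basis_of_set (B A : set R) : Prop :=
  [/\ B `<=` A, lin_free B & lin_span B = A].

Definition multiplicative_basis (B : set R) : Prop :=
  basis_of_set B setT /\ forall b b', B b -> B b' -> b * b' = 0 \/ B (b * b').

Definition conormed_basis (B : set R) : Prop :=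
  basis_of_set B setT /\
  forall S, socle_stage S -> exists2 B', B' `<=` B & basis_of_set B' S.

End Defs.

(* Main.v *)
Require Import Defs.
From mathcomp Require Import all_boot all_order all_algebra.
From mathcomp Require Import boolp classical_sets functions cardinality.
Set Implicit Arguments. Unset Strict Implicit. Unset Printing Implicit Defensive.
Import GRing.Theory.
Local Open Scope classical_set_scope.
Local Open Scope ring_scope.

Section Stages.
Variables (K : fieldType) (R : comAlgType K).
Implicit Types (I J S T X Y C : set R).

Lemma socle_over_ge I : I `<=` socle_over I.
Proof. by move=> x Ix J [_ [IJ _]]; apply: IJ. Qed.

Lemma stage0 S : socle_stage S -> S 0.
Proof.
elim=> [I _ I0|F _ _]; first exact: socle_over_ge.
by left.
Qed.

Definition extreme C := forall X, socle_stage X -> X `<=` C -> X <> C ->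
  socle_over X `<=` C.

Lemma extremeA C : socle_stage C -> extreme C ->
  forall X, socle_stage X -> X `<=` C \/ socle_over C `<=` X.
Proof.
move=> sC eC X; elim=> [Y sY IH|F sF IH].
  case: IH => [YC|gCY]; last by right; apply: subset_trans gCY (@socle_over_ge Y).
  have [->|nYC] := pselect (Y = C); first by right.
  by left; apply: eC.
have [FC|] := pselect (forall Y, F Y -> Y `<=` C).
  left=> x [->|[Y FY Yx]]; first exact: stage0.
  exact: FC FY _ Yx.
move=> /existsNP[Y /not_implyP[FY nYC]].
right; have [//|gY] := IH Y FY.
by move=> x /gY Yx; right; exists Y.
Qed.

Lemma all_extreme C : socle_stage C -> extreme C.
Proof.
elim=> [Y sY eY|F sF IH].
  move=> X sX XgY nX.
  have [XY|gYX] := extremeA sY eY sX; last first.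
    by exfalso; apply: nX; apply/seteqP; split.
  have [->//|nXY] := pselect (X = Y).
  exact: subset_trans (eY X sX XY nXY) (@socle_over_ge Y).
move=> X sX XC nXC.
have [z [Cz nXz]] : exists z, ([set 0] `|` \bigcup_(I in F) I) z /\ ~ X z.
  apply: contra_notP nXC => H; apply/seteqP; split=> // x Cx.
  by apply: contra_notP H => nx; exists x.
case: Cz => [z0|[Y FY Yz]]; first by exfalso; apply: nXz; rewrite z0; apply: stage0.
have XY : X `<=` Y.
  have [//|gYX] := extremeA (sF Y FY) (IH Y FY) sX.
  by exfalso; apply: nXz; apply: gYX; apply: socle_over_ge.
have nXY : X <> Y by move=> E; apply: nXz; rewrite E.
move=> x /(IH Y FY X sX XY nXY) Yx; right; by exists Y.
Qed.

Lemma stage_chain S T : socle_stage S -> socle_stage T -> S `<=` T \/ T `<=` S.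
Proof.
move=> sS sT; case: (extremeA sT (all_extreme sT) sS) => [ST|gST]; first by left.
right; apply: subset_trans gST; apply: socle_over_ge.
Qed.

Lemma ideal_socle_over I : is_ideal (socle_over I).
Proof.
split.
- by move=> J [[J0 _ _] _].
- by move=> x y Hx Hy J HJ; case: (HJ) => [[_ JD _] _]; apply: JD; [apply: Hx|apply: Hy].
- by move=> r x Hx J HJ; case: (HJ) => [[_ _ JM] _]; apply: JM; apply: Hx.
Qed.

Lemma stage_ideal S : socle_stage S -> is_ideal S.
Proof.
elim=> [I _ _|F sF IH]; first exact: ideal_socle_over.
split; first by left.
- move=> x y [->|[X FX Xx]] [->|[Y FY Yy]]; rewrite ?add0r ?addr0.
  + by left.
  + by right; exists Y.
  + by right; exists X.
  have [XY|YX] := stage_chain (sF X FX) (sF Y FY).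
    by right; exists Y => //; case: (IH Y FY) => _ D _; apply: D => //; apply: XY.
  by right; exists X => //; case: (IH X FX) => _ D _; apply: D => //; apply: YX.
- move=> r x [->|[X FX Xx]]; first by left; rewrite mulr0.
  by right; exists X => //; case: (IH X FX) => _ _ M; apply: M.
Qed.

End Stages.

Section Span.
Variables (K : fieldType) (R : comAlgType K).
Implicit Types (B S : set R).

Definition spanP B : set R := [set x | exists s : seq (K * R),
  (forall p, p \in s -> B p.2) /\ x = \sum_(p <- s) p.1 *: p.2].

Lemma span0 B : spanP B 0.
Proof. by exists [::]; rewrite big_nil. Qed.

Lemma span_in B x : B x -> spanP B x.
Proof.
move=> Bx; exists [:: (1, x)]; split; last by rewrite big_seq1 scale1r.
by move=> p; rewrite inE => /eqP ->.
Qed.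

Lemma spanD B x y : spanP B x -> spanP B y -> spanP B (x + y).
Proof.
move=> [s [sB ->]] [t [tB ->]]; exists (s ++ t); split; last by rewrite big_cat.
by move=> p; rewrite mem_cat => /orP[/sB|/tB].
Qed.

Lemma spanZ B a x : spanP B x -> spanP B (a *: x).
Proof.
move=> [s [sB ->]]; exists [seq (a * p.1, p.2) | p <- s]; split.
  by move=> p /mapP[q qs ->]; exact: sB qs.
rewrite big_map scaler_sumr; apply: eq_bigr => p _; by rewrite scalerA.
Qed.

Lemma spanN B x : spanP B x -> spanP B (- x).
Proof. by move=> /(spanZ (-1)); rewrite scaleN1r. Qed.

Lemma spanB B x y : spanP B x -> spanP B y -> spanP B (x - y).
Proof. by move=> Hx /spanN; apply: spanD. Qed.

Lemma span_sum B (I : Type) (r : seq I) (F : I -> R) :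
  (forall i, spanP B (F i)) -> spanP B (\sum_(i <- r) F i).
Proof.
move=> H; elim: r => [|i r IH]; first by rewrite big_nil; apply: span0.
by rewrite big_cons; apply: spanD.
Qed.

Lemma span_mono B B' : B `<=` B' -> spanP B `<=` spanP B'.
Proof. by move=> BB x [s [sB ->]]; exists s; split => // p /sB /BB. Qed.

Lemma span_ideal B S : is_ideal S -> B `<=` S -> spanP B `<=` S.
Proof.
move=> [S0 SD SM] BS x [s [sB ->]]; elim: s sB => [|p s IH] sB.
  by rewrite big_nil.
rewrite big_cons; apply: SD; last by apply: IH => q qs; apply: sB; rewrite inE qs orbT.
rewrite -[p.2]mul1r scalerAl; apply: SM; apply: BS; apply: sB; exact: mem_head.
Qed.

Lemma lin_spanE B : lin_span B = spanP B.
Proof.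
apply/seteqP; split.
  move=> x [s [c [sB ->]]]; exists [seq (c b, b) | b <- s]; split.
    by move=> p /mapP[b bs ->]; exact: sB bs.
  by rewrite big_map.
move=> x [s [sB ->]].
suff [r [c [ru rB E]]] : exists (r : seq R) (c : R -> K), [/\ uniq r,
    (forall b, b \in r -> B b) & \sum_(p <- s) p.1 *: p.2 = \sum_(b <- r) c b *: b].
  by exists r, c; split.
elim: s sB => [|p s IH] sB.
  by exists [::], (fun _ => 0); split => //; rewrite !big_nil.
have [|r [c [ru rB E]]] := IH.
  by move=> q qs; apply: sB; rewrite inE qs orbT.
have Bp : B p.2 by apply: sB; apply: mem_head.
rewrite big_cons E.
have [pr|npr] := boolP (p.2 \in r).
  exists r, (fun b => if b == p.2 then c b + p.1 else c b); split => //.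
  rewrite (bigD1_seq p.2) //= (bigD1_seq p.2 pr ru) /= eqxx scalerDl addrCA addrA.
  congr (_ + _); apply: eq_bigr => b /negPf ->; done.
exists (p.2 :: r), (fun b => if b == p.2 then p.1 else c b); split => /=.
- by rewrite npr ru.
- by move=> b; rewrite inE => /orP[/eqP->//|/rB].
rewrite big_cons eqxx; congr (_ + _); apply: eq_big_seq => b br.
by case: eqP => // E'; rewrite -E' br in npr.
Qed.

End Span.

Section Tree.
Variables (K : fieldType) (R : comAlgType K).
Variable d : nat -> R.
Hypothesis d_idem : forall n, d n * d n = d n.

Definition lit (b : bool) (x : R) := if b then x else 1 - x.

Lemma lit_idem b n : lit b (d n) * lit b (d n) = lit b (d n).
Proof.
case: b => /=; first exact: d_idem.
by rewrite mulrBl mul1r mulrBr mulr1 d_idem subrr subr0.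
Qed.

Lemma lit_orth b b' n : b != b' -> lit b (d n) * lit b' (d n) = 0.
Proof.
case: b; case: b' => //= _; rewrite ?mulrBl ?mulrBr ?mul1r ?mulr1 d_idem ?subrr //.
Qed.

Lemma lit_sum b n : lit b (d n) + lit (~~ b) (d n) = 1.
Proof. by case: b => /=; rewrite ?[d n + _]addrC subrK. Qed.

Inductive Atom : nat -> R -> Prop :=
| A0 : Atom 0 1
| AS n p b : Atom n p -> Atom n.+1 (p * lit b (d n)).

Lemma Atom0_inv q : Atom 0 q -> q = 1.
Proof. by move=> H; inversion H. Qed.

Lemma AtomS_inv n q : Atom n.+1 q -> exists p b, Atom n p /\ q = p * lit b (d n).
Proof. by move=> H; inversion H; exists p, b. Qed.

Lemma Atom_idem n p : Atom n p -> p * p = p.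
Proof.
elim=> [|m q b _ IH]; first by rewrite mulr1.
by rewrite mulrACA IH lit_idem.
Qed.

Lemma Atom_orth n p q : Atom n p -> Atom n q -> p <> q -> p * q = 0.
Proof.
move=> Ap; elim: Ap q => [|m p' b Ap' IH] q.
  by move=> /Atom0_inv -> [].
move=> /AtomS_inv[q' [b' [Aq' ->]]] ne.
have [E|nE] := pselect (p' = q').
  subst q'; have nb : b != b' by apply/negP => /eqP E; apply: ne; rewrite E.
  by rewrite mulrACA lit_orth // mulr0.
by rewrite mulrACA IH // mul0r.
Qed.

Lemma Atom_le N q : Atom N q -> forall m b, Atom m b -> (m <= N)%N ->
  q * b = q \/ q * b = 0.
Proof.
elim=> [|n p c Ap IH] m b Ab.
  by rewrite leqn0 => /eqP E; subst m; rewrite (Atom0_inv Ab) mulr1; left.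
rewrite leq_eqVlt => /orP[/eqP E|]; first subst m.
  have [<-|ne] := pselect (p * lit c (d n) = b).
    by left; apply: Atom_idem; apply: AS.
  by right; apply: (Atom_orth (AS c Ap) Ab ne).
rewrite ltnS => /(IH _ _ Ab)[E|E].
  by left; rewrite mulrAC E.
by right; rewrite mulrAC E mul0r.
Qed.

Fixpoint atl n : seq R :=
  if n is m.+1 then [seq p * lit b (d m) | p <- atl m, b <- [:: true; false]]
  else [:: 1].

Lemma atl_Atom n p : p \in atl n -> Atom n p.
Proof.
elim: n p => [|n IH] p /=; first by rewrite inE => /eqP ->; apply: A0.
move=> /flatten_mapP[q qa]; rewrite !inE => /orP[]/eqP->; [exact: (AS true (IH _ qa)) | exact: (AS false (IH _ qa))].
Qed.

Lemma atl_sum n : \sum_(p <- atl n) p = 1.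
Proof.
elim: n => [|n IH] /=; first by rewrite big_seq1.
rewrite big_flatten big_map -[RHS]IH; apply: eq_bigr => p _.
by rewrite big_cons big_seq1 /= -mulrDr [d n + _]addrC subrK mulr1.
Qed.


Lemma neq_negb (b c : bool) : b != c -> b = ~~ c.
Proof. by case: b; case: c. Qed.

Lemma lit_compl b n : lit b (d n) = 1 - lit (~~ b) (d n).
Proof. by rewrite -(lit_sum b n) addrK. Qed.

Lemma both_nz p n b : p * lit b (d n) != 0 -> p * lit (~~ b) (d n) != 0 ->
  p * d n != 0 /\ p * (1 - d n) != 0.
Proof. by case: b => /= *; split. Qed.

Lemma span_sumR (B : set R) (r : seq R) (F : R -> R) :
  (forall i, i \in r -> spanP B (F i)) -> spanP B (\sum_(i <- r) F i).
Proof.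
elim: r => [|i r IH] H; first by rewrite big_nil; apply: span0.
rewrite big_cons; apply: spanD; first by apply: H; apply: mem_head.
by apply: IH => j jr; apply: H; rewrite inE jr orbT.
Qed.

Lemma span_trans (B1 B2 : set R) : B1 `<=` spanP B2 -> spanP B1 `<=` spanP B2.
Proof.
move=> H x [s [sB ->]]; elim: s sB => [|p s IH] sB; first by rewrite big_nil; apply: span0.
rewrite big_cons; apply: spanD.
  by apply: spanZ; apply: H; apply: sB; apply: mem_head.
by apply: IH => q qs; apply: sB; rewrite inE qs orbT.
Qed.

Variable St : set R -> Prop.
Hypothesis St_chain : forall S T, St S -> St T -> S `<=` T \/ T `<=` S.
Hypothesis St_ideal : forall S, St S -> is_ideal S.

Definition keep (p : R) n : bool :=
  ~~ `[< forall S, St S -> S (p * d n) -> S (p * (1 - d n)) >].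

Lemma drop_prop p n S : St S ->
  S (p * lit (~~ keep p n) (d n)) -> S (p * lit (keep p n) (d n)).
Proof.
rewrite /keep; case: asboolP => [H|H] /=; first exact: H.
move=> sS H1; move/existsNP: H => [S' /not_implyP [sS' /not_implyP [H2 H3]]].
case: (St_chain sS sS') => [SS'|S'S]; first by exfalso; apply: H3; apply: SS'.
by apply: S'S.
Qed.

Definition BN N (x : R) : Prop := x = 1 \/ exists n p,
  [/\ (n < N)%N, Atom n p, p * d n != 0, p * (1 - d n) != 0 &
      x = p * lit (keep p n) (d n)].

Definition Bt : set R := [set x | exists N, BN N x].

Lemma BN_Atom N x : BN N x -> exists2 m, (m <= N)%N & Atom m x.
Proof.
case=> [->|[n [p [lt Ap _ _ ->]]]]; first by exists 0%N => //; apply: A0.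
by exists n.+1 => //; apply: AS.
Qed.

Lemma Bt_Atom x : Bt x -> exists m, Atom m x.
Proof. by case=> N /BN_Atom[m _ Am]; exists m. Qed.

Lemma Bt1 : Bt 1.
Proof. by exists 0%N; left. Qed.

Lemma Bt_kept n p : Atom n p -> p * d n != 0 -> p * (1 - d n) != 0 ->
  Bt (p * lit (keep p n) (d n)).
Proof. by move=> Ap n1 n2; exists n.+1; right; exists n, p; split. Qed.

Lemma Bt_mul b b' : Bt b -> Bt b' -> b * b' = 0 \/ Bt (b * b').
Proof.
move=> Bb Bb'; have [m Am] := Bt_Atom Bb; have [m' Am'] := Bt_Atom Bb'.
case: (leqP m m') => le.
  case: (Atom_le Am' Am le) => E; first by right; rewrite mulrC E.
  by left; rewrite mulrC E.
case: (Atom_le Am Am' (ltnW le)) => E; first by right; rewrite E.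
by left; rewrite E.
Qed.

Lemma Atom_span n p : Atom n p -> spanP Bt p.
Proof.
elim=> [|{}n {}p b Ap IH]; first by apply: span_in; apply: Bt1.
have [->|nz1] := eqVneq (p * lit b (d n)) 0; first exact: span0.
have [z2|nz2] := eqVneq (p * lit (~~ b) (d n)) 0.
  by rewrite lit_compl mulrBr mulr1 z2 subr0.
have [n1 n2] := both_nz nz1 nz2.
have [Eb|Eb] := eqVneq b (keep p n); first by rewrite Eb; apply: span_in; apply: Bt_kept.
have Eb' := neq_negb Eb.
rewrite Eb' lit_compl negbK mulrBr mulr1; apply: spanB => //.
by apply: span_in; apply: Bt_kept.
Qed.

Lemma Atom_conormal S : St S -> forall n p, Atom n p -> S p -> spanP (Bt `&` S) p.
Proof.
move=> sS; have [S0 SD SM] := St_ideal sS.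
move=> n p; elim=> [|{}n {}p b Ap IH] Sp; first by apply: span_in; split=> //; apply: Bt1.
have [->|nz1] := eqVneq (p * lit b (d n)) 0; first exact: span0.
have [z2|nz2] := eqVneq (p * lit (~~ b) (d n)) 0.
  move: Sp; rewrite lit_compl mulrBr mulr1 z2 subr0; exact: IH.
have [n1 n2] := both_nz nz1 nz2.
have [Eb|Eb] := eqVneq b (keep p n).
  by rewrite Eb in Sp *; apply: span_in; split=> //; apply: Bt_kept.
have Eb' := neq_negb Eb.
rewrite Eb' in Sp *.
have Sk := drop_prop sS Sp.
have Sp' : S p.
  by rewrite -[p]mulr1 -(lit_sum (keep p n) n) mulrDr; apply: SD.
rewrite lit_compl negbK mulrBr mulr1; apply: spanB; first exact: IH.
by apply: span_in; split=> //; apply: Bt_kept.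
Qed.

Lemma span_d_Bt n : spanP Bt (d n).
Proof.
rewrite -[d n]mul1r -(atl_sum n) mulr_suml; apply: span_sumR => q /atl_Atom Aq.
exact: (Atom_span (AS true Aq)).
Qed.

Hypothesis span_d : forall x, spanP (range d) x.

Lemma Bt_span x : spanP Bt x.
Proof.
by apply: (span_trans _ (span_d x)) => y [n _ <-]; apply: span_d_Bt.
Qed.


Lemma lit_nz q n b : q * d n != 0 -> q * (1 - d n) != 0 -> q * lit b (d n) != 0.
Proof. by case: b. Qed.

Lemma new_form N k : BN N.+1 k -> ~ BN N k -> exists q,
  [/\ Atom N q, q * d N != 0, q * (1 - d N) != 0 & k = q * lit (keep q N) (d N)].
Proof.
case=> [E|[n [p [lt Ap n1 n2 E]]]] nB; first by exfalso; apply: nB; left.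
move: lt; rewrite ltnS leq_eqVlt => /orP[/eqP En|lt].
  by subst n; exists p; split.
by exfalso; apply: nB; right; exists n, p; split.
Qed.

Lemma BN_free N : forall (s : seq R) (c : R -> K), uniq s -> (forall b, b \in s -> BN N b) ->
  \sum_(b <- s) c b *: b = 0 -> forall b, b \in s -> c b = 0.
Proof.
have one_nz : (1 : R) != 0 := oner_neq0 R.
elim: N => [|N IH] s c us sB E.
  have B1 b : b \in s -> b = 1.
    by move=> /sB [//|[n [p [//]]]].
  case: s us sB E B1 => [//|a [|a' s']] us sB E B1 b.
    rewrite inE => /eqP ->; move: E; rewrite big_seq1 (B1 a (mem_head _ _)).
    by move/eqP; rewrite scaler_eq0 (negPf one_nz) orbF => /eqP.
  move: us => /= /andP[]; rewrite inE (B1 a (mem_head _ _)).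
  by rewrite (B1 a'); [rewrite eqxx | rewrite !inE eqxx orbT].
have new k : k \in s -> ~ BN N k -> c k = 0.
  move=> ks nk; have [q [Aq n1 n2 Ek]] := new_form (sB k ks) nk.
  set k' := q * lit (~~ keep q N) (d N).
  have kn : k != 0 by rewrite Ek; apply: lit_nz.
  have k'n : k' != 0 by apply: lit_nz.
  have qn : q != 0 by apply/eqP => q0; move: kn; rewrite Ek q0 mul0r eqxx.
  have kk : k * k = k by rewrite Ek; apply: Atom_idem; apply: AS.
  pose phi b := if `[< BN N b >] then (if `[< q * b = q >] then c b else 0) else 0.
  have F1 b : b \in s -> c b *: (b * k') = phi b *: k'.
    move=> bs; rewrite /phi; case: asboolP => [Bb|nBb].
      have [m mN Am] := BN_Atom Bb.
      case: (Atom_le Aq Am mN) => qb.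
        by rewrite qb (asboolT (erefl q)) /k' mulrA [b * q]mulrC qb.
      have -> : `[< q * b = q >] = false.
        by apply/asboolP => qb'; move: qn; rewrite -qb' qb eqxx.
      by rewrite /k' mulrA [b * q]mulrC qb !mul0r scaler0 scale0r.
    have [q2 [Aq2 _ _ Eb]] := new_form (sB b bs) nBb.
    rewrite scale0r Eb /k' mulrACA.
    have [<-|nq] := pselect (q2 = q).
      by rewrite lit_orth ?mulr0 ?scaler0 //; case: (keep _ _).
    by rewrite (Atom_orth Aq2 Aq nq) mul0r scaler0.
  have F2 b : b \in s -> c b *: (b * k) = phi b *: k + (if b == k then c b else 0) *: k.
    move=> bs; rewrite /phi; case: asboolP => [Bb|nBb].
      have bk : (b == k) = false by apply/negP => /eqP bk; apply: nk; rewrite -bk.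
      rewrite bk scale0r addr0.
      have [m mN Am] := BN_Atom Bb.
      case: (Atom_le Aq Am mN) => qb.
        by rewrite qb (asboolT (erefl q)) Ek mulrA [b * q]mulrC qb.
      have -> : `[< q * b = q >] = false.
        by apply/asboolP => qb'; move: qn; rewrite -qb' qb eqxx.
      by rewrite Ek mulrA [b * q]mulrC qb !mul0r scaler0 scale0r.
    have [q2 [Aq2 _ _ Eb]] := new_form (sB b bs) nBb.
    rewrite scale0r add0r.
    have [Eq|nq] := pselect (q2 = q).
      have bk : b = k by rewrite Eb Ek Eq.
      by rewrite bk kk eqxx.
    have bk0 : b * k = 0 by rewrite Eb Ek mulrACA (Atom_orth Aq2 Aq nq) mul0r.
    have -> : (b == k) = false.
      by apply/negP => /eqP bk; move: kn; rewrite -kk -{1}bk bk0 eqxx.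
    by rewrite bk0 scaler0 scale0r.
  have S1 : (\sum_(b <- s) phi b) *: k' = 0.
    rewrite scaler_suml; transitivity (\sum_(b <- s) c b *: (b * k')).
      by apply: eq_big_seq => b bs; rewrite F1.
    under eq_bigr => b _ do rewrite scalerAl.
    by rewrite -mulr_suml E mul0r.
  have phi0 : \sum_(b <- s) phi b = 0.
    by move/eqP: S1; rewrite scaler_eq0 (negPf k'n) orbF => /eqP.
  have S2 : (\sum_(b <- s) (if b == k then c b else 0)) *: k = 0.
    have : \sum_(b <- s) c b *: (b * k) = 0.
      under eq_bigr => b _ do rewrite scalerAl.
      by rewrite -mulr_suml E mul0r.
    rewrite (eq_big_seq _ F2) big_split /= -!scaler_suml phi0 scale0r add0r.
    done.
  move/eqP: S2; rewrite scaler_eq0 (negPf kn) orbF => /eqP.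
  by rewrite (bigD1_seq k) //= eqxx big1 ?addr0 // => b /negPf ->.
pose P := fun b => `[< BN N b >].
have E' : \sum_(b <- filter P s) c b *: b = 0.
  rewrite big_filter big_mkcond /= -[RHS]E; apply: eq_big_seq => b bs.
  rewrite /P; case: asboolP => // nb; by rewrite new // scale0r.
move=> b bs; have [Bb|nb] := pselect (BN N b); last exact: new.
apply: (IH (filter P s) c) => //.
- exact: filter_uniq.
- by move=> b'; rewrite mem_filter => /andP[/asboolP].
- by rewrite mem_filter bs andbT; apply/asboolP.
Qed.


Lemma BN_mono N M x : (N <= M)%N -> BN N x -> BN M x.
Proof.
move=> NM [->|[n [p [lt Ap n1 n2 E]]]]; first by left.
by right; exists n, p; split => //; apply: leq_trans NM.
Qed.

Lemma Bt_free : lin_free Bt.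
Proof.
move=> s c us sB.
have [N HN] : exists N, forall b, b \in s -> BN N b.
  elim: s us sB => [|a s IH] us sB; first by exists 0%N.
  have [||N HN] := IH.
  - by case/andP: us.
  - by move=> b bs; apply: sB; rewrite inE bs orbT.
  have [Na Ha] := sB a (mem_head _ _).
  exists (maxn N Na) => b; rewrite inE => /orP[/eqP->|bs].
    by apply: BN_mono Ha; apply: leq_maxr.
  by apply: BN_mono (HN b bs); apply: leq_maxl.
exact: (BN_free us HN).
Qed.

Lemma Bt_conormal S : St S -> S `<=` spanP (Bt `&` S).
Proof.
move=> sS x Sx; have [S0 SD SM] := St_ideal sS.
have [s [sB Ex]] := Bt_span x.
have [N HN] : exists N, forall p, p \in s -> exists2 m, (m <= N)%N & Atom m p.2.
  elim: s {Ex} sB => [|a s IH] sB; first by exists 0%N.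
  have [|N HN] := IH; first by move=> b bs; apply: sB; rewrite inE bs orbT.
  have [Na Ha] := Bt_Atom (sB a (mem_head _ _)).
  exists (maxn N Na) => b; rewrite inE => /orP[/eqP->|bs].
    by exists Na => //; apply: leq_maxr.
  have [m mN Am] := HN b bs; exists m => //; apply: leq_trans mN (leq_maxl _ _).
rewrite -[x]mulr1 -(atl_sum N) mulr_sumr; apply: span_sumR => q /atl_Atom Aq.
have [sig Es] : exists sig : K, x * q = sig *: q.
  rewrite Ex {Ex Sx}; elim: s sB HN => [|a s IH] sB HN.
    by exists 0; rewrite big_nil mul0r scale0r.
  have [||sig Es] := IH; first by move=> b bs; apply: sB; rewrite inE bs orbT.
    by move=> b bs; apply: HN; rewrite inE bs orbT.
  have [m mN Am] := HN a (mem_head _ _).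
  rewrite big_cons mulrDl Es -scalerAl.
  case: (Atom_le Aq Am mN) => qa.
    by exists (a.1 + sig); rewrite mulrC qa scalerDl.
  by exists sig; rewrite mulrC qa scaler0 add0r.
have Sxq : S (x * q) by rewrite mulrC; apply: SM.
have [s0|nz] := eqVneq sig 0; first by rewrite Es s0 scale0r; apply: span0.
have Sq : S q.
  have -> : q = sig^-1 *: (x * q) by rewrite Es scalerA mulVf ?scale1r.
  by rewrite -[x * q]mul1r scalerAl; apply: SM.
rewrite Es; apply: spanZ; exact: (Atom_conormal sS Aq Sq).
Qed.

End Tree.

Section Main.
Variables (K : fieldType) (R : comAlgType K).

Lemma ideal_scale (S : set R) a x : is_ideal S -> S x -> S (a *: x).
Proof. by move=> [_ _ SM] Sx; rewrite -[x]mul1r scalerAl; apply: SM. Qed.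

Lemma ideal_opp (S : set R) x : is_ideal S -> S x -> S (- x).
Proof. by move=> iS Sx; rewrite -scaleN1r; apply: ideal_scale. Qed.

Lemma lift_idem (S T : set R) x : von_neumann_regular R -> is_ideal S -> is_ideal T ->
  T x -> S (x * x - x) -> exists e, [/\ e * e = e, T e & S (e - x)].
Proof.
move=> vnr iS [_ _ TM] Tx Ss.
set s := x * x - x in Ss.
have [t Et] := vnr s.
set u := s * t.
have hu : u * u = u by rewrite /u mulrA -Et.
have hs : s * u = s by rewrite /u [s * t]mulrC mulrA -Et.
exists (x * (1 - u)); split.
- rewrite mulrACA.
  have -> : (1 - u) * (1 - u) = 1 - u.
    by rewrite mulrBl mul1r mulrBr mulr1 hu subrr subr0.
  have -> : x * x = s + x by rewrite /s subrK.
  by rewrite mulrDl mulrBr mulr1 hs subrr add0r.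
- by rewrite mulrC; apply: TM.
- rewrite mulrBr mulr1 addrAC subrr add0r; apply: ideal_opp => //.
  by case: iS => _ _ SM; rewrite /u mulrCA mulrC; apply: SM.
Qed.

Lemma layer_span (S T : set R) (I : Type) : von_neumann_regular R ->
  is_ideal S -> is_ideal T -> countable [set: I] -> layer_iso S T I ->
  exists D : set R, [/\ countable D, (forall e, D e -> e * e = e) &
     forall z, T z -> exists2 y, spanP D y & S (z - y)].
Proof.
move=> vnr iS iT cI [f [fin flin fmul fsurj fker]].
pose delta (i j : I) : K := if `[< j = i >] then 1 else 0.
have dfin i : finite_set [set j | delta i j != 0].
  apply: sub_finite_set (finite_set1 i) => j /=; rewrite /delta.
  by case: asboolP => // _; rewrite eqxx.
have Hs i : exists x, T x /\ f x = delta i.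
  by have [x ? ?] := fsurj _ (dfin i); exists x.
have [g Hg] := choice Hs.
have gsq i : S (g i * g i - g i).
  have [Tg fg] := Hg i.
  have T2 : T (g i * g i - g i).
    by case: (iT) => _ TD TM; apply: TD; [apply: TM | apply: (ideal_opp iT Tg)].
  apply/(fker _ T2).
  have -> : g i * g i - g i = (-1) *: g i + g i * g i by rewrite scaleN1r addrC.
  rewrite flin //; last by case: (iT) => _ _ TM; apply: TM.
  rewrite fmul // fg; apply: funext => j; rewrite /delta.
  by case: asboolP => _; rewrite ?mulr1 ?mulr0 ?mulN1r ?addNr ?addr0.
have [e He] := choice (fun i => lift_idem vnr iS iT (proj1 (Hg i)) (gsq i)).
exists (range e); split.
- apply: (card_le_trans (card_image_le _ _)); exact: cI.
- by move=> _ [i _ <-]; case: (He i).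
have fe i : f (e i) = delta i.
  have [_ Te Seg] := He i; have [Tg fg] := Hg i.
  have Teg : T (e i - g i).
    by case: (iT) => _ TD _; apply: TD => //; apply: ideal_opp.
  have f0 := (proj2 (fker _ Teg) Seg).
  have -> : e i = 1 *: (e i - g i) + g i by rewrite scale1r subrK.
  rewrite flin // f0 fg; apply: funext => j /=; by rewrite mul1r add0r.
have main (l : seq {classic I}) : forall z, T z -> (forall j, f z j != 0 -> j \in l) ->
    exists2 y, spanP (range e) y & S (z - y).
  elim: l => [|i l IH] z Tz Hz.
    exists 0; first exact: span0.
    rewrite subr0; apply/(fker _ Tz); apply: funext => j.
    by apply/eqP; apply: contraT => /Hz.
  have [_ Tei _] := He i.
  pose z' := (- f z i) *: e i + z.
  have Tz' : T z' by case: (iT) => _ TD _; apply: TD => //; apply: ideal_scale.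
  have [|y' sy' Sy'] := IH z' Tz'.
    move=> j; rewrite /z' flin // fe /delta.
    case: asboolP => [->|nji]; first by rewrite mulr1 addNr eqxx.
    rewrite mulr0 add0r => /Hz /orP[/eqP ji|//].
    by exfalso; apply: nji.
  exists (y' + f z i *: e i).
    by apply: spanD => //; apply: spanZ; apply: span_in; exists i.
  have -> : z - (y' + f z i *: e i) = z' - y'.
    by rewrite /z' scaleNr opprD addrA [- _ + z]addrC addrAC.
  exact: Sy'.
move=> z Tz; have [l El] := proj1 (@finite_seqP {classic I} [set j | f z j != 0]) (fin z Tz).
apply: (main l z Tz) => j nj.
have : [set j | f z j != 0] j by [].
by rewrite El.
Qed.

End Main.

Section Final.
Variables (K : fieldType) (R : comAlgType K).

Lemma span_setT_D : RK_countable_type R ->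
  exists D : set R, [/\ countable D, (forall e, D e -> e * e = e) & forall x, spanP D x].
Proof.
case=> [[vnr semi lay] cst lay2].
have HD S : exists D : set R, socle_stage S -> S != setT ->
    [/\ countable D, (forall e, D e -> e * e = e) &
        forall z, socle_over S z -> exists2 y, spanP D y & S (z - y)].
  have [sS|nsS] := pselect (socle_stage S); last by exists set0.
  have [nT|eT] := boolP (S != setT); last by exists set0.
  have [I [_ cI li]] := lay2 S sS nT.
  have [D HD] := layer_span vnr (stage_ideal sS) (ideal_socle_over S) cI li.
  by exists D.
have [Df HDf] := choice HD.
pose D := \bigcup_(S in [set S | socle_stage S /\ S != setT]) Df S.
exists D; split.
- apply: bigcup_countable.
    by apply: sub_countable cst; apply: subset_card_le => S [].
  by move=> S [sS nT]; case: (HDf S sS nT).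
- by move=> e [S [sS nT] De]; case: (HDf S sS nT) => _ He _; apply: He.
- suff: forall S, socle_stage S -> S `<=` spanP D by move=> /(_ _ semi) H x; apply: H.
  move=> S; elim => [I sI IH|F sF IH] z.
    have [nT|eT] := boolP (I != setT).
      move=> Iz; have [_ _ Hz] := HDf I sI nT; have [y sy Sy] := Hz z Iz.
      rewrite -(subrK y z); apply: spanD; first exact: IH.
      by apply: (span_mono _ sy) => e De; exists I.
    by move: eT; rewrite negbK => /eqP eI _; apply: IH; rewrite eI.
  case=> [->|[Y FY Yz]]; first exact: span0.
  exact: IH Y FY z Yz.
Qed.

Lemma lin_free_sub (B B' : set R) : B' `<=` B -> lin_free B -> lin_free B'.
Proof. by move=> BB fB s c us sB; apply: fB => // b /sB /BB. Qed.

End Final.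

Theorem corollary7p4 (K : fieldType) (R : comAlgType K) :
  RK_countable_type R ->
  exists B : set R, conormed_basis B /\ multiplicative_basis B.
Proof.
move=> H; have [D [cD Did Dsp]] := span_setT_D H.
have [d [d_idem Dd]] : exists d : nat -> R, (forall n, d n * d n = d n) /\ D `<=` range d.
  case/pfcard_geP: cD => [D0|[f]].
    by exists (fun _ => 0); split; [move=> n; rewrite mulr0 | rewrite D0].
  exists f; split; last exact: (@surj _ _ _ _ f).
  by move=> n; apply: Did; apply: (@funS _ _ _ _ f).
have span_d x : spanP (range d) x := span_mono Dd (Dsp x).
pose St := @socle_stage K R.
have chain : forall S T, St S -> St T -> S `<=` T \/ T `<=` S := @stage_chain K R.
have idl : forall S, St S -> is_ideal S := @stage_ideal K R.
have basis : basis_of_set (Bt d St) setT.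
  split => //; first exact: Bt_free.
  by rewrite lin_spanE; apply/seteqP; split => // x _; apply: Bt_span.
exists (Bt d St); split; last by split => // b b'; apply: Bt_mul.
split => // S sS; exists (Bt d St `&` S); first by move=> x [].
split; first by move=> x [].
  by apply: lin_free_sub (Bt_free d_idem (St:=St)) => x [].
rewrite lin_spanE; apply/seteqP; split.
  by apply: span_ideal (idl S sS) _ => x [].
exact: (Bt_conormal d_idem chain idl span_d sS).
Qed.
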